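(* Let $n\ge1$ and $k$ be integers. If the complete bipartite graph $K_{n,n}$ is $k$-removable, then $k> n-\sqrt{2n(\log n+1)}$.
   Context: $\log$ is the natural logarithm. For a graph $G$, $f:V(G)\to\mathbb Z$, $u\in V(G)$ and $W\subseteq N(u)$, $\mathsf{DelSave}(G,f,u,W)$ outputs $G'=G-u$ and $f'$ with $f'(x)=f(x)-1$ for $x\in N(u)\setminus W$ and $f'(x)=f(x)$ otherwise; it is legal if $f(u)>\sum_{w\in W}f(w)$ and $f'(x)\ge1$ for all $x\in V(G')$. $G$ is $f$-removable if all vertices can be deleted by successive legal $\mathsf{DelSave}$ applications, each time replacing $(G,f)$ by the output; $G$ is $k$-removable if it is $f$-removable for the constant function $f\equiv k$. *)

(* Defs.v *)
From mathcomp Require Import all_boot.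
From Stdlib Require Import ZArith Reals.
Set Implicit Arguments. Unset Strict Implicit. Unset Printing Implicit Defensive.

(* A simple graph: vertex type T (finite) and symmetric irreflexive adjacency e.
   The current graph during the deletion process is the induced subgraph on a
   vertex set S : {set T}.  Weights f : T -> Z (values outside S are irrelevant). *)

Definition zsum (T : finType) (W : {set T}) (f : T -> Z) : Z :=
  \big[Z.add/0%Z]_(w in W) f w.

Definition nbhd (T : finType) (e : rel T) (S : {set T}) (u : T) : {set T} :=
  [set x in S | e u x].

Definition delsave_f (T : finType) (e : rel T) (S : {set T}) (f : T -> Z)
  (u : T) (W : {set T}) : T -> Z :=
  fun x => if (x \in nbhd e S u) && (x \notin W) then (f x - 1)%Z else f x.

Definition delsave_legal (T : finType) (e : rel T) (S : {set T}) (f : T -> Z)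
  (u : T) (W : {set T}) : Prop :=
  u \in S /\ W \subset nbhd e S u /\
  (zsum W f < f u)%Z /\
  (forall x, x \in S :\ u -> (1 <= delsave_f e S f u W x)%Z).

Inductive removable (T : finType) (e : rel T) : {set T} -> (T -> Z) -> Prop :=
| removable_empty f : removable e set0 f
| removable_step S f u W :
    delsave_legal e S f u W ->
    removable e (S :\ u) (delsave_f e S f u W) ->
    removable e S f.

Definition k_removable (T : finType) (e : rel T) (k : Z) : Prop :=
  removable e [set: T] (fun _ => k).

Definition Knn_rel (n : nat) : rel ('I_n + 'I_n)%type :=
  fun x y => match x, y with
             | inl _, inr _ | inr _, inl _ => true
             | _, _ => false
             end.
Arguments Knn_rel n : clear implicits.

(* Main.v *)
Require Import Defs.
From HB Require Import structures.
From mathcomp Require Import all_boot.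
From Stdlib Require Import ZArith Reals.
From Stdlib Require Import Lra Lia.
From mathcomp Require Import zify.
Import ssrnat.
Set Implicit Arguments. Unset Strict Implicit. Unset Printing Implicit Defensive.

HB.instance Definition _ := Monoid.isComLaw.Build Z 0%Z Z.add Z.add_assoc Z.add_comm Z.add_0_l.

Section K.
Variable n : nat.
Notation T := ('I_n + 'I_n)%type.

Definition side (x : T) : bool := if x is inl _ then true else false.
Definition cnt (S : {set T}) (s : bool) : nat := #|[set x in S | side x == s]|.
Definition del S s := n - cnt S s.
Definition Ecnt S := cnt S true * cnt S false.

Lemma Knn_side x y : Knn_rel n x y = (side x != side y).
Proof. by case: x; case: y. Qed.

Lemma nbhd_eq S u : nbhd (Knn_rel n) S u = [set x in S | side x == ~~ side u].
Proof.
apply/setP => x; rewrite !inE Knn_side.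
by case: (side x); case: (side u).
Qed.

Lemma cnt_le S s : cnt S s <= n.
Proof.
pose g (x : T) : 'I_n := match x with inl i => i | inr i => i end.
rewrite /cnt -(card_in_imset (f := g)).
  by apply: leq_trans (max_card _) _; rewrite card_ord.
move=> [i|i] [j|j]; rewrite !inE /= => /andP[_ /eqP hx] /andP[_ /eqP hy] /= hij;
  subst; congruence.
Qed.

Lemma cnt_D1 (S : {set T}) (u : T) (s : bool) : u \in S -> cnt (S :\ u) s = cnt S s - (side u == s).
Proof.
move=> Hu; rewrite /cnt.
have -> : [set x in S :\ u | side x == s] = [set x in S | side x == s] :\ u.
  by apply/setP => x; rewrite !inE andbA.
rewrite (cardsD1 u [set x in S | side x == s]) !inE Hu /=.
by case: (side u == s) => /=; rewrite ?subn0 ?add0n // add1n subSS subn0.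
Qed.

Lemma cnt_setT s : cnt setT s = n.
Proof.
have HA : #|[set x : T | side x]| + #|~: [set x : T | side x]| = n + n.
  by rewrite cardsC card_sum card_ord.
have e1 : cnt setT true = #|[set x : T | side x]|.
  by rewrite /cnt; apply: eq_card => x; rewrite !inE eqb_id.
have e2 : cnt setT false = #|~: [set x : T | side x]|.
  by rewrite /cnt; apply: eq_card => x; rewrite !inE eqbF_neg.
have := cnt_le setT true; have := cnt_le setT false.
case: s; lia.
Qed.

Lemma cnt_set0 s : cnt set0 s = 0.
Proof.
rewrite /cnt; apply/eqP; rewrite cards_eq0; apply/eqP/setP => x; by rewrite !inE.
Qed.

Lemma zsumD1 (S : {set T}) f u : u \in S -> zsum S f = (f u + zsum (S :\ u) f)%Z.
Proof.
move=> Hu; rewrite /zsum (bigD1 u) //=; congr (_ + _)%Z.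
by apply: eq_bigl => x; rewrite !inE andbC.
Qed.

Lemma zsum_const (A : {set T}) c : zsum A (fun _ => c) = (Z.of_nat #|A| * c)%Z.
Proof.
rewrite /zsum big_const; elim: #|A| => [|m IH]; first by [].
rewrite iterS IH; lia.
Qed.

Lemma zsum_ge (A : {set T}) f c : (forall x, x \in A -> (c <= f x)%Z) ->
  (Z.of_nat #|A| * c <= zsum A f)%Z.
Proof.
move=> H; rewrite -zsum_const /zsum.
apply: (big_ind2 (fun x y => (x <= y)%Z)).
- lia.
- move=> *; lia.
- exact: H.
Qed.

Lemma zsum_dec (A D : {set T}) f : D \subset A ->
  zsum A (fun x => if x \in D then (f x - 1)%Z else f x) = (zsum A f - Z.of_nat #|D|)%Z.
Proof.
move=> HD.
rewrite /zsum (big_setID D) /= [in RHS](big_setID D) /=.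
have -> : A :&: D = D by apply/setIidPr.
rewrite (eq_bigr (fun x => (f x + -1)%Z)); last by move=> x ->; lia.
rewrite (eq_bigr (F1 := fun x => if x \in D then _ else _) (fun x => f x)); last first.
  by move=> x; rewrite inE => /andP[/negbTE -> _].
rewrite big_split /=.
have := zsum_const D (-1)%Z; rewrite /zsum => ->.
have aux : forall (X Y : Z) (c c' : nat), c = c' -> (X + Z.of_nat c * -1 + Y = X + Y - Z.of_nat c')%Z.
  by move=> X Y c c' ->; lia.
exact: aux.
Qed.
Definition P1 (kn a b : nat) : R :=
  (INR (minn a kn) * INR (minn b kn) - INR kn * (INR (minn a kn) + INR (minn b kn))
   - (INR a - INR (minn a kn)) - (INR b - INR (minn b kn)))%R.

Fixpoint Fk (kn a : nat) : R :=
  match a with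
  | 0 => 0%R
  | p.+1 => (Fk kn p + (if (p < kn)%N then (INR kn - 1) / (INR kn - INR p) else 0))%R
  end.

Definition Pot kn a b : R := (P1 kn a b + Fk kn a + Fk kn b)%R.

Lemma Pot_sym kn a b : Pot kn a b = Pot kn b a.
Proof. rewrite /Pot /P1; lra. Qed.

Lemma stepR kn q o (fu w : R) : 1 <= kn ->
  (1 <= fu)%R -> (INR kn - INR o <= fu)%R -> (0 <= w)%R ->
  (w * (if (q < kn)%N then INR kn - INR q else 1) <= fu - 1)%R ->
  (Pot kn q o - Pot kn q.+1 o <= fu - w)%R.
Proof.
move=> Hk Hf1 Hfo Hw Hc.
rewrite /Pot /P1.
change (Fk kn q.+1) with (Fk kn q + (if (q < kn)%N then (INR kn - 1) / (INR kn - INR q) else 0))%R.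
move: Hc; case: (ltnP q kn) => Hq Hc.
- have e1 : minn q kn = q by apply/minn_idPl; exact: ltnW.
  have e2 : minn q.+1 kn = q.+1 by apply/minn_idPl.
  rewrite e2 S_INR.
  have Hqk : (INR q + 1 <= INR kn)%R by rewrite -S_INR; apply: le_INR; apply/leP.
  set d := ((INR kn - 1) / (INR kn - INR q))%R.
  have Hd : (d * (INR kn - INR q) = INR kn - 1)%R by rewrite /d; field; lra.
  case: (ltnP o kn) => Ho.
  + have e3 : minn o kn = o by apply/minn_idPl; exact: ltnW.
    idtac.
    have Ho' : (INR o + 1 <= INR kn)%R by rewrite -S_INR; apply: le_INR; apply/leP.
    have Ho0 : (0 <= INR o)%R by apply: pos_INR.
    nra.
  + have e3 : minn o kn = kn by apply/minn_idPr.
    idtac.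
    have Hk1 : (1 <= INR kn)%R by rewrite -/(INR 1); apply: le_INR; apply/leP.
    have Hd0 : (0 <= d)%R.
      nra.
    nra.
- have e1 : minn q kn = kn by apply/minn_idPr.
  have e2 : minn q.+1 kn = kn by apply/minn_idPr; exact: leqW.
  rewrite e2 S_INR. lra.
Qed.

Fixpoint Hn (m : nat) : R := match m with 0 => 0%R | p.+1 => (Hn p + / INR p.+1)%R end.

Lemma Fk_bound kn a : (Fk kn a <= (INR kn - 1) * (Hn kn - Hn (kn - minn a kn)))%R.
Proof.
elim: a => [|a IH].
- rewrite /= min0n subn0; lra.
- change (Fk kn a.+1) with (Fk kn a + (if (a < kn)%N then (INR kn - 1) / (INR kn - INR a) else 0))%R.
  move: IH; case: (ltnP a kn) => Ha IH.
  + have e1 : minn a kn = a by apply/minn_idPl; exact: ltnW.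
    have e2 : minn a.+1 kn = a.+1 by apply/minn_idPl.
    rewrite ?e1 in IH; rewrite ?e2.
    have e3 : kn - a = (kn - a.+1).+1 by rewrite subnSK.
    rewrite e3 in IH.
    change (Hn (kn - a.+1).+1) with (Hn (kn - a.+1) + / INR (kn - a.+1).+1)%R in IH.
    rewrite -e3 in IH.
    have e4 : INR (kn - a) = (INR kn - INR a)%R by rewrite minus_INR //; apply/leP; exact: ltnW.
    rewrite e4 in IH. rewrite /Rdiv. lra.
  + have e1 : minn a kn = kn by apply/minn_idPr.
    have e2 : minn a.+1 kn = kn by apply/minn_idPr; exact: leqW.
    rewrite ?e1 in IH; rewrite ?e2. lra.
Qed.

Definition Inv (k : Z) (S : {set T}) (f : T -> Z) :=
  forall v, v \in S -> (1 <= f v)%Z /\ (k - Z.of_nat (del S (~~ side v)) <= f v)%Z.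

Lemma IZR_nat m : IZR (Z.of_nat m) = INR m.
Proof. by rewrite INR_IZR_INZ. Qed.

Lemma main kn : 1 <= kn -> forall S f, removable (Knn_rel n) S f -> Inv (Z.of_nat kn) S f ->
  (Pot kn (del S true) (del S false) - Pot kn n n <= IZR (zsum S f) - INR (Ecnt S))%R.
Proof.
move=> Hk S f H; elim: H => {S f} [f | S f u W Hleg Hrem IH] HI.
- rewrite /del /Ecnt !cnt_set0 /zsum big_set0 subn0 muln0 /=; lra.
- case: Hleg => Hu [HW [Hsum Hpos]].
  set N := nbhd (Knn_rel n) S u.
  set f' := delsave_f (Knn_rel n) S f u W.
  have HN : N = [set x in S | side x == ~~ side u] by exact: nbhd_eq.
  have HNsub : N \subset S :\ u.
    apply/subsetP => x; rewrite HN !inE => /andP[Hx /eqP Hs]; rewrite Hx andbT.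
    by apply/eqP => Hxu; move: Hs; rewrite Hxu; case: (side u).
  have cardN : #|N| = cnt S (~~ side u) by rewrite HN.
  have cpos : 0 < cnt S (side u).
    by rewrite /cnt card_gt0; apply/set0Pn; exists u; rewrite !inE Hu eqxx.
  have cle := cnt_le S (side u).
  have Hdel_u : del (S :\ u) (side u) = (del S (side u)).+1.
    rewrite /del cnt_D1 // eqxx /=; lia.
  have Hdel_o : del (S :\ u) (~~ side u) = del S (~~ side u).
    by rewrite /del cnt_D1 //; case: (side u); rewrite /= subn0.
  have HI' : Inv (Z.of_nat kn) (S :\ u) f'.
    move=> v; rewrite in_setD1 => /andP[Hvu HvS]; split.
      by apply: Hpos; rewrite in_setD1 Hvu HvS.
    have [H1 H2] := HI v HvS.
    rewrite /f' /delsave_f.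
    case: (boolP (side v == side u)) => Hs.
    + have HvN : (v \in N) = false by rewrite HN !inE HvS /=; move: Hs; case: (side v); case: (side u).
      rewrite -/N HvN /= (eqP Hs) Hdel_o; rewrite (eqP Hs) in H2; exact: H2.
    + have Hs' : ~~ side v = side u by move: Hs; case: (side v); case: (side u).
      rewrite Hs' Hdel_u; rewrite Hs' in H2.
      case: ifP => _; lia.
  have IH' := IH HI'.
  have Hz1 : zsum S f = (f u + zsum (S :\ u) f)%Z by exact: zsumD1.
  have Hz2 : zsum (S :\ u) f' = (zsum (S :\ u) f - Z.of_nat #|N :\: W|)%Z.
    rewrite -zsum_dec; last by apply: subset_trans HNsub; apply: subsetDl.
    rewrite /zsum; apply: eq_bigr => x _; by rewrite /f' /delsave_f in_setD andbC.
  have HWN : W \subset N by exact: HW.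
  have cardNW : #|N :\: W| = #|N| - #|W| by rewrite cardsD (setIidPr HWN).
  have WleN : #|W| <= #|N| by exact: subset_leq_card.
  have HE : Ecnt S = Ecnt (S :\ u) + #|N|.
    rewrite cardN /Ecnt !cnt_D1 //; case: (side u) cpos => /= cpos; rewrite ?subn0; nia.
  set q := del S (side u). set o := del S (~~ side u).
  have [Hu1 Hu2] := HI u Hu.
  set cZ := (if (q < kn)%N then (Z.of_nat kn - Z.of_nat q)%Z else 1%Z).
  have Hwc : forall w, w \in W -> (cZ <= f w)%Z.
    move=> w Hw; have HwN : w \in N by apply: (subsetP HWN).
    move: HwN; rewrite HN !inE => /andP[HwS /eqP Hsw].
    have [Hw1 Hw2] := HI w HwS.
    rewrite Hsw negbK -/q in Hw2.
    rewrite /cZ; case: ifP => Hq; lia.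
  have HWc : (Z.of_nat #|W| * cZ <= zsum W f)%Z by apply: zsum_ge.
  have HR1 : (INR #|W| * (if (q < kn)%N then INR kn - INR q else 1) <= IZR (f u) - 1)%R.
    have HZ : (Z.of_nat #|W| * cZ <= f u - 1)%Z by lia.
    move: HZ; rewrite /cZ; case: ifP => _ HZ; apply IZR_le in HZ;
      rewrite ?mult_IZR ?minus_IZR ?IZR_nat in HZ; lra.
  have HR2 : (INR kn - INR o <= IZR (f u))%R.
    rewrite -/o in Hu2; apply IZR_le in Hu2; rewrite minus_IZR !IZR_nat in Hu2; lra.
  have HR3 : (1 <= IZR (f u))%R by apply IZR_le in Hu1.
  have Hst := stepR Hk HR3 HR2 (pos_INR #|W|) HR1.
  have HzR : IZR (zsum S f) = (IZR (f u) + IZR (zsum (S :\ u) f') + INR #|N| - INR #|W|)%R.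
    rewrite Hz1 Hz2 cardNW plus_IZR minus_IZR IZR_nat minus_INR; last by apply/leP.
    lra.
  have HER : INR (Ecnt S) = (INR (Ecnt (S :\ u)) + INR #|N|)%R by rewrite HE plus_INR.
  move: IH' Hst Hdel_u Hdel_o; rewrite HzR HER /q /o -/f'.
  case: (side u) => /= IH' Hst Hdu Hdo; rewrite Hdu Hdo in IH'.
  + lra.
  + rewrite [Pot kn (del S false) _]Pot_sym [Pot kn (del S false).+1 _]Pot_sym in Hst. lra.
Qed.


Lemma k_ge1 (k : Z) : 0 < n -> removable (Knn_rel n) setT (fun _ => k) -> (1 <= k)%Z.
Proof.
move=> Hn H; inversion H as [f0 E1 E2| S0 f0 u W Hleg Hrem E1 E2].
- have := in_setT (inl (Ordinal Hn) : T); by rewrite -E1 in_set0.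
- case: Hleg => _ [_ [_ Hpos]].
  pose x : T := match u with inl i => inr i | inr i => inl i end.
  have Hx : x \in [set: T] :\ u by rewrite !inE andbT; rewrite /x; case: (u).
  have := Hpos x Hx; rewrite /delsave_f; case: ifP => _; lia.
Qed.

End K.

Section RealPart.
Local Open Scope R_scope.

Lemma ln_step (m : nat) : (1 <= m)%nat -> / INR (S m) <= ln (INR (S m)) - ln (INR m).
Proof.
  intros Hm.
  assert (H0 : 0 < INR m) by (apply lt_0_INR; lia).
  assert (H1 : INR (S m) = INR m + 1) by (rewrite S_INR; ring).
  rewrite H1.
  assert (Hp : 0 < INR m + 1) by lra.
  pose proof (exp_ineq1_le (- / (INR m + 1))) as He.
  assert (Heq : 1 + - / (INR m + 1) = INR m * / (INR m + 1)) by (field; lra).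
  rewrite Heq in He.
  assert (Hpos : 0 < INR m * / (INR m + 1)) by (apply Rmult_lt_0_compat; [lra| apply Rinv_0_lt_compat; lra]).
  assert (Hl : ln (INR m * / (INR m + 1)) <= - / (INR m + 1)).
  { destruct (Rle_lt_or_eq_dec _ _ He) as [Hlt|Heq2].
    - left. rewrite -(ln_exp (- / (INR m + 1))). apply ln_increasing; auto.
    - right. rewrite Heq2 ln_exp. reflexivity. }
  have Hi : 0 < / (INR m + 1) by apply Rinv_0_lt_compat; lra.
  rewrite (ln_mult _ _ H0 Hi) (ln_Rinv _ Hp) in Hl. lra.
Qed.

Lemma Hn_le_ln (m : nat) : (1 <= m)%nat -> Hn m <= 1 + ln (INR m).
Proof.
  induction m as [|m IH]; intros Hm; [lia|].
  destruct (Nat.eq_dec m 0) as [->|Hm0].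
  - simpl. rewrite ln_1. lra.
  - assert (IH' := IH ltac:(lia)). pose proof (@ln_step m ltac:(lia)).
    change (Hn (S m)) with (Hn m + / INR (S m)). lra.
Qed.

Lemma final_real (n k : R) (Hn1 : 1 <= n) (Hkn : k < n) (H : (n - k) * (n - k) < 2 * n * (ln n + 1)) :
  k > n - sqrt (2 * n * (ln n + 1)).
Proof.
  assert (Hs : sqrt ((n - k) * (n - k)) < sqrt (2 * n * (ln n + 1))).
  { apply sqrt_lt_1_alt. split; [nra|exact H]. }
  change ((n - k) * (n - k)) with (Rsqr (n - k)) in Hs.
  rewrite sqrt_Rsqr in Hs; lra.
Qed.
End RealPart.

Theorem theorem4p6 (n : nat) (k : Z) :
  leq 1 n ->
  k_removable (Knn_rel n) k ->
  (IZR k > INR n - sqrt (2 * INR n * (ln (INR n) + 1)))%R.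
Proof.
move=> Hn Hrem.
have Hk1 := k_ge1 Hn Hrem.
have HnR : (1 <= INR n)%R by rewrite -/(INR 1); apply: le_INR; apply/leP.
have Hln : (0 <= ln (INR n))%R.
  case: (Rle_lt_or_eq_dec _ _ HnR) => H.
  - left; rewrite -ln_1; apply: ln_increasing; lra.
  - rewrite -H ln_1; lra.
case: (Rlt_or_le (IZR k) (INR n)) => Hlt; last first.
  have : (0 < sqrt (2 * INR n * (ln (INR n) + 1)))%R.
    apply: sqrt_lt_R0; nra.
  lra.
set kn := Z.to_nat k.
have Ek : k = Z.of_nat kn by rewrite /kn Z2Nat.id //; lia.
have Hkn1 : 1 <= kn by rewrite /kn; lia.
have EkR : IZR k = INR kn by rewrite Ek IZR_nat.
have Hknn : kn < n by apply/ltP; apply: INR_lt; rewrite -EkR.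
have Hinv : Inv (Z.of_nat kn) [set: 'I_n + 'I_n] (fun _ => k).
  by move=> v _; rewrite /del cnt_setT subnn; lia.
have M := main Hkn1 Hrem Hinv.
rewrite /del /Ecnt !cnt_setT subnn zsum_const cardsT card_sum card_ord in M.
have P00 : Pot kn 0 0 = 0%R by rewrite /Pot /P1 min0n /=; lra.
have e : minn n kn = kn by apply/minn_idPr; exact: ltnW.
have Pnn : Pot kn n n = (INR kn * INR kn - INR kn * (INR kn + INR kn) - (INR n - INR kn)
   - (INR n - INR kn) + Fk kn n + Fk kn n)%R by rewrite /Pot /P1 e.
have HF := Fk_bound kn n; rewrite e subnn /= in HF.
have HH := Hn_le_ln Hkn1.
have Hlnk : (ln (INR kn) <= ln (INR n))%R.
  left; apply: ln_increasing; first by apply: lt_0_INR; apply/ltP.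
  by apply: lt_INR; apply/ltP.
rewrite P00 Pnn mult_IZR IZR_nat plus_INR mult_INR EkR in M.
have Hkr : (1 <= INR kn)%R by rewrite -/(INR 1); apply: le_INR; apply/leP.
have Hknr : (INR kn + 1 <= INR n)%R by rewrite -S_INR; apply: le_INR; apply/leP.
set L := (ln (INR n) + 1)%R.
have HFL : (Fk kn n <= (INR kn - 1) * L)%R.
  apply: (Rle_trans _ _ _ HF); apply: Rmult_le_compat_l; rewrite /L; lra.
have HL : (0 < L)%R by rewrite /L; lra.
have HkL : ((INR kn - 1) * L < INR n * L)%R by apply: Rmult_lt_compat_r; lra.
apply: final_real; first by [].
- by rewrite EkR; lra.
- rewrite EkR -/L. nra.
Qed.
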